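(* Every finite nonempty left-cancellative semigroup (i.e. $ax=ay$ implies $x=y$) is $K$-thin.
   Context: For a finite nonempty semigroup $S$, the minimal ideal $K(S)$ is the intersection of all nonempty two-sided ideals of $S$. A Rees matrix semigroup $\mathcal{M}(H;I,J;p)$, for sets $I,J$, a group $H$ and a function $p\colon J\times I\to H$, is the set $I\times H\times J$ with product $(i,h,j)(i',h',j')=(i,h\,p(j,i')\,h',j')$. It is known that $K(S)$ is always isomorphic to such a Rees matrix semigroup with $H$ a finite group and $p$ normalized (i.e. $p(j_0,i)=e_H$ and $p(j,i_0)=e_H$ for some fixed $i_0\in I$, $j_0\in J$ and all $i,j$). $S$ is called $K$-thin if $K(S)$ has such a normalized Rees matrix structure with $|I|=1$ or $|J|=1$; equivalently, $K(S)$ is left-simple or right-simple. *)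

(* Defs.v *)
From mathcomp Require Import all_boot all_fingroup.
Set Implicit Arguments. Unset Strict Implicit. Unset Printing Implicit Defensive.
Local Open Scope group_scope.

Definition minimal_ideal (T : finType) (op : T -> T -> T) : {set T} :=
  [set x | [forall A : {set T},
     ([forall y, [forall a, (a \in A) ==> (op y a \in A) && (op a y \in A)]]
      && (A != set0)) ==> (x \in A)]].

Definition left_cancellative (T : Type) (op : T -> T -> T) : Prop :=
  forall a x y, op a x = op a y -> x = y.

Definition rees_mul (gT : finGroupType) (I J : Type) (p : J -> I -> gT)
    (u v : I * gT * J) : I * gT * J :=
  let: (i, h, j) := u in let: (i', h', j') := v in (i, h * p j i' * h', j').

Definition K_thin (T : finType) (op : T -> T -> T) : Prop :=
  let K := minimal_ideal op in
  exists (gT : finGroupType) (I J : finType) (p : J -> I -> gT)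
         (i0 : I) (j0 : J) (f : T -> I * gT * J),
    [/\ (forall i, p j0 i = 1) /\ (forall j, p j i0 = 1),
        (#|I| = 1)%N \/ (#|J| = 1)%N,
        {in K &, injective f},
        (forall y, exists2 x, x \in K & f x = y) &
        {in K &, forall x y, f (op x y) = rees_mul p (f x) (f y)}].

(* Main.v *)
Require Import Defs.
From mathcomp Require Import all_boot all_fingroup.

Local Open Scope group_scope.

Theorem proposition7p10 (T : finType) (op : T -> T -> T)
  (assoc_op : associative op) (nonempty : exists x : T, True)
  (lcanc : left_cancellative op) :
  K_thin op.
Proof.
have injL a : injective (op a) := lcanc a.
pose L a := perm (injL a).
have LE a x : L a x = op a x by rewrite permE.
have LM a b : L (op a b) = L b * L a.
  by apply/permP => x; rewrite permM !LE assoc_op.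
have idl e : op e e = e -> forall x, op e x = x.
  by move=> ee x; apply: (lcanc e); rewrite assoc_op ee.
have Lid e : op e e = e -> L e = 1.
  by move=> ee; apply/permP => x; rewrite LE perm1 idl.
pose jv a := (L a)^-1 a.
have ajv a : op a (jv a) = a by rewrite -LE permKV.
have jvP a : op (jv a) (jv a) == jv a.
  by apply/eqP; apply: (lcanc a); rewrite assoc_op !ajv.
case: nonempty => x0 _.
pose M := [set L a | a : T].
have LinM a : L a \in M by apply/imsetP; exists a.
have gM : group_set M.
  apply/group_setP; split.
    by rewrite -(Lid _ (eqP (jvP x0))).
  move=> _ _ /imsetP[a _ ->] /imsetP[b _ ->].
  by rewrite -LM.
pose G := Group gM.
have LinG a : L a \in G by exact: LinM.
pose J := {x : T | op x x == x}.
pose j a : J := exist _ (jv a) (jvP a).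
pose h a : subg_of G := subg G (L a)^-1.
have hE a : sgval (h a) = (L a)^-1 by rewrite subgK // groupV.
pose f a := (tt, h a, j a).
have KT x : x \in minimal_ideal op.
  rewrite inE; apply/forallP => A; apply/implyP => /andP[/forallP idA /set0Pn[a aA]].
  move: (idA ((L a)^-1 x)) => /forallP/(_ a); rewrite aA /= => /andP[_].
  by rewrite -LE permKV.
exists (subg_of G), unit, J, (fun _ _ => 1), tt, (j x0), f.
split.
- by split.
- by left; rewrite card_unit.
- move=> a b _ _ [] hab jab; move: hab => /(congr1 sgval); rewrite !hE => /invg_inj Lab.
  by rewrite -(permKV (L a) a) -(permKV (L b) b) -/(jv a) -/(jv b) jab Lab.
- move=> [[[] g] e].
  have gG : (sgval g)^-1 \in G by rewrite groupV subgP.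
  case/imsetP: gG => c _ gc.
  have ee : op (val e) (val e) = val e by apply/eqP; exact: (valP e).
  exists (op c (val e)); first exact: KT.
  rewrite /f; congr (_, _, _).
    by apply: val_inj; rewrite /= hE LM Lid // mul1g -gc invgK.
  apply: val_inj => /=; apply: (@perm_inj _ (L (op c (val e)))).
  by rewrite permKV LE -assoc_op ee.
- move=> a b _ _; rewrite /f /= mulg1; congr (_, _, _).
    by apply: val_inj; rewrite /= !hE LM invMg.
  apply: val_inj; rewrite /=. apply: (@perm_inj _ (L (op a b))).
  by rewrite permKV LE -assoc_op ajv.
Qed.
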